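(* Let $n\geq 8$, let $\mathfrak{X}=\{A_0,A_1,A_2\}$ be a non-symmetric class $2$ association scheme of order $n-1$, let $B_1$ be the $(2n-1)\times(2n-1)$ matrix defined from $A_1$ as in the context, and let $\mathfrak{Y}=\{I_{2n-1},B_1,B_1^T\}$. Then each of the sets $\{1,\dots,n-1\}$, $\{n\}$, $\{n+1,\dots,2n-1\}$ is mapped to itself by every element of $\operatorname{Aut}(\mathfrak{Y})$.
   Context: An association scheme of order $N$ is a set $\{A_0,\dots,A_d\}$ of $N\times N$ $0/1$-matrices such that $A_0=I_N$, $\sum_i A_i=J_N$ (all-ones matrix), each $A_i^T$ is in the set, and each product $A_iA_j$ is a linear combination of the $A_k$. It is non-symmetric of class $2$ if $d=2$ and $A_1^T=A_2\neq A_1$. The automorphism group of $\{A_0,\dots,A_d\}$ is $\{\sigma\in S_N : P_\sigma^TA_iP_\sigma=A_i \text{ for all } i\}$, where $P_\sigma$ is the permutation matrix of $\sigma$. Definition of $B_1$ (indices $1\le i,j\le n-1$): $(B_1)_{i,j}=(A_1)_{ij}$, $(B_1)_{i,n}=0$, $(B_1)_{i,n+j}=(A_0+A_1)_{ij}$; $(B_1)_{n,j}=1$, $(B_1)_{n,n}=0$, $(B_1)_{n,n+j}=0$; $(B_1)_{n+i,j}=(A_1)_{ij}$, $(B_1)_{n+i,n}=1$, $(B_1)_{n+i,n+j}=(A_2)_{ij}$. In block form, $B_1=\begin{bmatrix} A_1 & \mathbf{0} & A_0+A_1\\ \mathbf{1}^T & 0 & \mathbf{0}^T\\ A_1 & \mathbf{1}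 & A_2\end{bmatrix}$ with blocks indexed by $\{1,\dots,n-1\},\{n\},\{n+1,\dots,2n-1\}$. It is a fact that $\mathfrak{Y}$ is a non-symmetric class $2$ association scheme. *)

(* Defs.v *)
From HB Require Import structures.
From mathcomp Require Import all_boot all_order all_algebra all_fingroup.
Set Implicit Arguments. Unset Strict Implicit. Unset Printing Implicit Defensive.
Import GRing.Theory.
Local Open Scope ring_scope.

Definition is_assoc_scheme (N d : nat) (A : 'I_d.+1 -> 'M[rat]_N) : Prop :=
  [/\ (forall i x y, A i x y = 0 \/ A i x y = 1),
      A ord0 = 1%:M,
      \sum_(i < d.+1) A i = const_mx 1,
      (forall i, exists j, (A i)^T = A j) &
      (forall i j, exists c : 'I_d.+1 -> rat, A i *m A j = \sum_(k < d.+1) c k *: A k)].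

Definition fam3 (N : nat) (A0 A1 A2 : 'M[rat]_N) : 'I_3 -> 'M[rat]_N :=
  fun i => match val i with 0 => A0 | 1 => A1 | _ => A2 end.

Definition nonsym_class2_scheme (N : nat) (A0 A1 A2 : 'M[rat]_N) : Prop :=
  is_assoc_scheme (fam3 A0 A1 A2) /\ A1^T = A2 /\ A2 <> A1.

Definition aut_scheme (N d : nat) (A : 'I_d.+1 -> 'M[rat]_N) : {set {perm 'I_N}} :=
  [set s : {perm 'I_N} | [forall i, (perm_mx s)^T *m A i *m perm_mx s == A i]].

(* Entry of an m x m matrix at natural-number indices (0 outside range). *)
Definition mxe (m : nat) (A : 'M[rat]_m) (i j : nat) : rat :=
  match @insub _ (fun k => k < m)%N _ i, @insub _ (fun k => k < m)%N _ j with
  | Some i', Some j' => A i' j'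
  | _, _ => 0
  end.

(* The matrix B_1 of order 2n-1, with 0-based indices:
   block 1 = {0,...,n-2} (paper's {1,...,n-1}), block 2 = {n-1} (paper's {n}),
   block 3 = {n,...,2n-2} (paper's {n+1,...,2n-1}). *)
Definition B1 (n : nat) (A0 A1 A2 : 'M[rat]_(n.-1)) : 'M[rat]_(n.*2.-1) :=
  \matrix_(i, j)
    let i := val i in let j := val j in
    if (i < n.-1)%N then
      (if (j < n.-1)%N then mxe A1 i j
       else if j == n.-1 then 0
       else mxe (A0 + A1) i (j - n))
    else if i == n.-1 then
      (if (j < n.-1)%N then 1 else 0)
    else
      (if (j < n.-1)%N then mxe A1 (i - n) j
       else if j == n.-1 then 1
       else mxe A2 (i - n) (j - n)).

Definition blk1 (n : nat) : {set 'I_(n.*2.-1)} := [set i | (val i < n.-1)%N].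
Definition blk2 (n : nat) : {set 'I_(n.*2.-1)} := [set i | val i == n.-1].
Definition blk3 (n : nat) : {set 'I_(n.*2.-1)} := [set i | (n.-1 < val i)%N].

(* Main.v *)
Require Import Defs.
From HB Require Import structures.
From mathcomp Require Import all_boot all_order all_algebra all_fingroup.
From mathcomp Require Import zify ring lra.
Set Implicit Arguments. Unset Strict Implicit. Unset Printing Implicit Defensive.


Record tourn (m : nat) (R : rel 'I_m) (k l : nat) : Prop := Tourn {
  t_irr : forall a, R a a = false;
  t_tot : forall a b, a != b -> R a b || R b a;
  t_asym : forall a b, R a b -> R b a = false;
  t_k : forall a, #|[set z | R a z]| = k;
  t_l : forall a b, a != b -> #|[set z | R a z && R b z]| = l;
  t_lk : l.+2 <= k;
  t_out : forall i, exists a, R i a;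
  t_in : forall i, exists j, R j i }.

Record gg (m : nat) (R : rel 'I_m) (V : finType) (E : rel V) (c : V)
   (fX fY : 'I_m -> V) : Prop := GG {
  g_view : forall v, v = c \/ (exists a, v = fX a) \/ (exists a, v = fY a);
  g_cc : E c c = false;
  g_cX : forall a, E c (fX a);
  g_cY : forall a, E c (fY a) = false;
  g_Xc : forall a, E (fX a) c = false;
  g_Yc : forall a, E (fY a) c;
  g_XX : forall a b, E (fX a) (fX b) = R a b;
  g_XY : forall a b, E (fX a) (fY b) = (a == b) || R a b;
  g_YX : forall a b, E (fY a) (fX b) = R a b;
  g_YY : forall a b, E (fY a) (fY b) = R b a }.

Definition PP (V : finType) (E : rel V) (v : V) : Prop :=
  forall u, u != v -> exists w, [/\ w != u, w != v & forall z, E v z -> E u z -> E w z].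

Lemma PP_c m R V E c fX fY : @gg m R V E c fX fY -> PP E c.
Proof.
move=> G u huc.
have [hc|[[a ha]|[a ha]]] := g_view G u; subst u; first by rewrite eqxx in huc.
- exists (fY a); split.
  + by apply/eqP=> h; have := (g_Yc G) a; rewrite h (g_Xc G).
  + by apply/eqP=> h; have := (g_Yc G) a; rewrite h (g_cc G).
  move=> z; have [->|[[b ->]|[b ->]]] := g_view G z; first by rewrite (g_cc G).
    by rewrite (g_XX G) (g_YX G).
  by rewrite (g_cY G).
- exists (fX a); split.
  + by apply/eqP=> h; have := (g_Yc G) a; rewrite -h (g_Xc G).
  + by apply/eqP=> h; have := (g_cX G) a; rewrite h (g_cc G).
  move=> z; have [->|[[b ->]|[b ->]]] := g_view G z; first by rewrite (g_cc G).
    by rewrite (g_XX G) (g_YX G).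
  by rewrite (g_cY G).
Qed.

Lemma card_outD m R k l (T : @tourn m R k l) x a : R x a ->
  #|[set z | R x z] :\ a| = k.-1.
Proof.
move=> hxa; have := cardsD1 a [set z | R x z]; rewrite inE hxa (t_k T) => ->.
by rewrite add1n.
Qed.

Lemma notPP_X m R k l V E c fX fY : @tourn m R k l -> @gg m R V E c fX fY ->
  forall x, ~ PP E (fX x).
Proof.
move=> T G x HP.
have [a hxa] := t_out T x.
have hu : fY a != fX x by apply/eqP=> h; have := (g_Yc G) a; rewrite h (g_Xc G).
have [w [hw1 hw2 H]] := HP _ hu.
have Hx : E (fX x) (fY x) by rewrite (g_XY G) eqxx.
have [wc|[[b wb]|[b wb]]] := g_view G w; subst w.
- by have := H _ Hx; rewrite (g_YY G) hxa (g_cY G) => /(_ isT).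
- have hbx : b != x by apply: contraNneq hw2 => ->.
  have hbx' : R b x by have := H _ Hx; rewrite (g_YY G) hxa (g_XY G) (negbTE hbx) => /(_ isT).
  have sub : [set z | R x z] :\ a \subset [set z | R x z && R b z].
    apply/subsetP=> z; rewrite !inE => /andP[hza hxz]; rewrite hxz /=.
    have := t_tot T hza; rewrite orbC; case/orP=> hz.
      by have := H (fX z); rewrite !(g_XX G) (g_YX G) hxz hz => /(_ isT isT).
    have := H (fY z); rewrite !(g_XY G) (g_YY G) hxz hz orbT => /(_ isT isT).
    case/orP=> // /eqP ebz; subst z; by rewrite (t_asym T hbx') in hxz.
  have := subset_leq_card sub; rewrite (card_outD T hxa) (t_l T).
    by have := t_lk T; lia.
  by rewrite eq_sym.
- have hba : b != a by apply: contraNneq hw1 => ->.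
  have hxb : R x b by have := H _ Hx; rewrite (g_YY G) hxa (g_YY G) => /(_ isT).
  have := t_tot T hba; rewrite orbC; case/orP=> hz.
    by have := H (fX b); rewrite (g_XX G) (g_YX G) (g_YX G) hxb hz (t_irr T) => /(_ isT isT).
  by have := H (fY b); rewrite (g_XY G) (g_YY G) (g_YY G) hxb hz (t_irr T) orbT => /(_ isT isT).
Qed.

Lemma notPP_Y m R k l V E c fX fY : @tourn m R k l -> @gg m R V E c fX fY ->
  forall x, ~ PP E (fY x).
Proof.
move=> T G i HP.
have [j hji] := t_in T i.
have hu : fX j != fY i by apply/eqP=> h; have := (g_Yc G) i; rewrite -h (g_Xc G).
have [w [hw1 hw2 H]] := HP _ hu.
have Hx : E (fY i) (fY j) by rewrite (g_YY G).
have Hj : E (fX j) (fY j) by rewrite (g_XY G) eqxx.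
have [wc|[[b wb]|[b wb]]] := g_view G w; subst w.
- by have := H _ Hx Hj; rewrite (g_cY G).
- have hbj : b != j by apply: contraNneq hw1 => ->.
  have hbj' : R b j by have := H _ Hx Hj; rewrite (g_XY G) (negbTE hbj).
  have sub : [set z | R j z] :\ i \subset [set z | R j z && R b z].
    apply/subsetP=> z; rewrite !inE => /andP[hzi hjz]; rewrite hjz /=.
    have := t_tot T hzi; rewrite orbC; case/orP=> hz.
      by have := H (fX z); rewrite !(g_XX G) (g_YX G) hjz hz => /(_ isT isT).
    have := H (fY z); rewrite !(g_XY G) (g_YY G) hjz hz orbT => /(_ isT isT).
    case/orP=> // /eqP ebz; subst z; by rewrite (t_asym T hbj') in hjz.
  have := subset_leq_card sub; rewrite (card_outD T hji) (t_l T).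
    by have := t_lk T; lia.
  by rewrite eq_sym.
- have hbi : b != i by apply: contraNneq hw2 => ->.
  have hjb : R j b by have := H _ Hx Hj; rewrite (g_YY G).
  have := t_tot T hbi; case/orP=> hz; last first.
    by have := H (fX b); rewrite (g_XX G) (g_YX G) (g_YX G) hjb hz (t_irr T) => /(_ isT isT).
  have sub : i |: [set z | R j z && R i z] \subset [set z | R j z && R b z].
    apply/subsetP=> z; rewrite !inE => /orP[/eqP->|/andP[hjz hiz]].
      by rewrite hji hz.
    by have := H (fX z); rewrite !(g_XX G) !(g_YX G) hjz hiz => /(_ isT isT) ->.
  have := subset_leq_card sub; rewrite cardsU1 inE (t_irr T) andbF /= (t_l T).
    rewrite (t_l T); first by lia.
    by apply/eqP=> e; move: hjb; rewrite e (t_irr T).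
  by apply/eqP=> e; move: hji; rewrite e (t_irr T).
Qed.

Lemma PP_perm (V : finType) (E : rel V) (s : {perm V}) :
  (forall a b, E (s a) (s b) = E a b) -> forall v, PP E v -> PP E (s v).
Proof.
move=> hs v HP u hu.
have hu0 : (s^-1)%g u != v by apply: contraNneq hu => <-; rewrite permKV.
have [w [hw1 hw2 H]] := HP _ hu0.
exists (s w); split.
- by apply: contraNneq hw1 => <-; rewrite permK.
- by apply: contraNneq hw2 => /perm_inj ->.
move=> z; rewrite -(permKV s z) -{1}(permKV s u) !hs; exact: H.
Qed.

Lemma fix_c m R k l V E c fX fY (s : {perm V}) :
  @tourn m R k l -> @gg m R V E c fX fY ->
  (forall a b, E (s a) (s b) = E a b) -> s c = c.
Proof.
move=> T G hs.
have := PP_perm hs (PP_c G).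
have [//|[[a ->]|[a ->]]] := g_view G (s c).
  by move/(notPP_X T G).
by move/(notPP_Y T G).
Qed.


Import GRing.Theory Num.Theory.
Local Open Scope ring_scope.

Lemma sum_bool (I : finType) (P : pred I) :
  \sum_(z : I) ((P z)%:R : rat) = (#|[set z | P z]|)%:R.
Proof.
rewrite -sum1_card natr_sum [RHS]big_mkcond /=.
by apply: eq_bigr => z _; rewrite inE; case: (P z).
Qed.

Lemma num1 (M c0 : rat) : 7 <= M -> 2 * c0 = M - 1 -> c0 != 0.
Proof. move=> h1 h2; apply/eqP => h; move: h2; rewrite h; lra. Qed.

Lemma num2 (M c0 c1 : rat) : 7 <= M -> 2 * c0 = M - 1 -> c0 = 1 + 2 * c1 ->
  [/\ c1 + 2 <= c0, 1 <= c0 & 1 <= M - 1 - c0].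
Proof. move=> h1 h2 h3; split; lra. Qed.

Lemma scheme_facts m (A0 A1 A2 : 'M[rat]_m) : (7 <= m)%N ->
  nonsym_class2_scheme A0 A1 A2 ->
  [/\ A0 = 1%:M, A2 = A1^T, forall a b, A1 a b = (A1 a b == 1)%:R &
      exists k l, tourn (fun a b => A1 a b == 1) k l].
Proof.
move=> hm [[H01 HA0 Hsum Htr Hmul] [HT Hne]].
have h1 a b : A1 a b = 0 \/ A1 a b = 1 := H01 (@Ordinal 3 1 isT) a b.
have eA a b : A1 a b = (A1 a b == 1)%:R by case: (h1 a b) => ->; rewrite ?eqxx // eq_sym oner_eq0.
have HA0' : A0 = 1%:M := HA0.
have hs a b : A0 a b + A1 a b + A2 a b = 1.
  have := congr1 (fun M : 'M[rat]_m => M a b) Hsum; rewrite summxE !big_ord_recr big_ord0 /= add0r mxE.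
  done.
have eA2 a b : A2 a b = A1 b a by rewrite -HT mxE.
have eA0 a b : A0 a b = (a == b)%:R by rewrite HA0' mxE.
split => //.
set R := fun a b : 'I_m => A1 a b == 1.
have diag a : A1 a a = 0.
  have := hs a a; rewrite eA2 eA0 eqxx; case: (h1 a a) => // ->.
  rewrite /= => h; exfalso; move: h; lra.
have irr a : R a a = false by rewrite /R diag eq_sym oner_eq0.
have off a b : a != b -> A1 a b + A1 b a = 1.
  by move=> hab; have := hs a b; rewrite eA2 eA0 (negbTE hab) add0r.
have tot a b : a != b -> R a b || R b a.
  move=> /off; rewrite /R (eA a b) (eA b a).
  by case: (A1 a b == 1); case: (A1 b a == 1) => //=; rewrite addr0 => /eqP; rewrite eq_sym oner_eq0.
have asym a b : R a b -> R b a = false.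
  move=> hab; have hne : a != b by apply: contraTneq hab => ->; rewrite irr.
  have := off a b hne; rewrite /R in hab *; rewrite (eqP hab) => /eqP.
  by rewrite -subr_eq0 addrAC subrr add0r => /eqP ->; rewrite eq_sym oner_eq0.
have [c Hc] := Hmul (@Ordinal 3 1 isT) (@Ordinal 3 2 isT).
have E3 (F : 'I_3 -> 'M[rat]_m) : \sum_(k<3) F k = F ord0 + F (@Ordinal 3 1 isT) + F (@Ordinal 3 2 isT).
  by rewrite !big_ord_recr big_ord0 /= add0r; congr (F _ + F _ + F _); apply: val_inj.
rewrite E3 /= in Hc.
set c0 := c ord0 in Hc; set c1 := c _ in Hc; set c2 := c _ in Hc.
have Hce a b : \sum_z A1 a z * A1 b z = c0 * A0 a b + c1 * A1 a b + c2 * A1 b a.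
  transitivity ((A1 *m A2) a b); first by rewrite mxE; apply: eq_bigr => z _; rewrite eA2.
  by rewrite Hc !mxE /fam3 /= eA2.
have cnt a b : \sum_z A1 a z * A1 b z = (#|[set z | R a z && R b z]|)%:R.
  rewrite -sum_bool; apply: eq_bigr => z _; rewrite (eA a z) (eA b z) -natrM.
  by rewrite /R; case: (A1 a z == 1); case: (A1 b z == 1).
have sq a b : A1 a b * A1 a b = A1 a b by case: (h1 a b) => ->; rewrite ?mulr0 ?mulr1.
have e12 : c1 = c2.
  case: (boolP [exists a, exists b, A1 b a != A1 a b]) => [/existsP[a /existsP[b hab]] | /existsPn hn].
    have : \sum_z A1 a z * A1 b z = \sum_z A1 b z * A1 a z by apply: eq_bigr => z _; rewrite mulrC.
    rewrite !Hce.
    have hab' : a != b by apply: contraNneq hab => ->.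
    rewrite !eA0 (negbTE hab') eq_sym (negbTE hab') /= !mulr0 !add0r => /eqP.
    rewrite -subr_eq0 => /eqP h.
    have : (c1 - c2) * (A1 a b - A1 b a) = 0 by rewrite -h; ring.
    move/eqP; rewrite mulf_eq0 subr_eq0 subr_eq0 [A1 a b == _]eq_sym (negbTE hab) orbF => /eqP //.
  exfalso; apply: Hne; apply/matrixP => i j.
  by have := hn i => /existsPn/(_ j)/negPn/eqP; rewrite eA2.
have row1 a : \sum_b A1 a b = c0.
  rewrite -[LHS](eq_bigr _ (fun b _ => sq a b)) Hce eA0 eqxx diag /=; ring.
have delta (a : 'I_m) : \sum_b ((a == b)%:R : rat) = 1.
  rewrite (bigD1 a) //= eqxx big1 ?addr0 // => b hb.
  by rewrite eq_sym (negbTE hb).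
have row2 a : \sum_b A2 a b = m%:R - 1 - c0.
  have : \sum_b (A0 a b + A1 a b + A2 a b) = m%:R.
    by rewrite (eq_bigr _ (fun b _ => hs a b)) sumr_const card_ord.
  rewrite !big_split /= (eq_bigr _ (fun b _ => eA0 a b)) delta row1 => <-; ring.
have Eq1 : (m%:R : rat) * c0 = m%:R * (m%:R - 1 - c0).
  transitivity (\sum_a \sum_b A2 a b); last by rewrite (eq_bigr _ (fun a _ => row2 a)) sumr_const card_ord mulr_natl.
  rewrite (eq_bigr _ (fun a _ => eq_bigr _ (fun b _ => eA2 a b))) exchange_big /=.
  by rewrite (eq_bigr _ (fun a _ => row1 a)) sumr_const card_ord mulr_natl.
have m0 : (m%:R : rat) != 0 by rewrite pnatr_eq0; lia.
have Ec0 : 2 * c0 = m%:R - 1.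
  have : (m%:R : rat) * (2 * c0 - (m%:R - 1)) = m%:R * c0 - m%:R * (m%:R - 1 - c0) by ring.
  rewrite Eq1 subrr.
  by move/eqP; rewrite mulf_eq0 (negbTE m0) /= subr_eq0 => /eqP.
have col1 a : \sum_b A1 b a = m%:R - 1 - c0.
  by rewrite -(row2 a); apply: eq_bigr => b _; rewrite eA2.
have Eq2 (a : 'I_m) : c0 + c1 * (m%:R - 1) = c0 * (m%:R - 1 - c0).
  transitivity (\sum_b \sum_z A1 a z * A1 b z).
    rewrite (eq_bigr _ (fun b _ => Hce a b)) !big_split /= -!mulr_sumr (eq_bigr _ (fun b _ => eA0 a b)) delta row1 col1 -e12; ring.
  rewrite exchange_big /=.
  rewrite (eq_bigr (fun z => A1 a z * (m%:R - 1 - c0))); first by rewrite -mulr_suml row1.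
  by move=> z _; rewrite -mulr_sumr col1.
have hm' : (7 : rat) <= m%:R by rewrite (ler_nat rat 7 m).
have c0ne : c0 != 0 := num1 hm' Ec0.
have Ec1 : c0 = 1 + 2 * c1.
  have := Eq2 (@Ordinal m 0 (leq_trans (isT : (1 <= 7)%N) hm)) => h.
  have : c0 * (1 + 2 * c1 - c0) = 0.
    have -> : c0 * (1 + 2 * c1 - c0) = (c0 + c1 * (2 * c0)) - c0 * (2 * c0 - c0) by ring.
    by rewrite Ec0 h -Ec0; ring.
  by move/eqP; rewrite mulf_eq0 (negbTE c0ne) /= subr_eq0 => /eqP ->.
have [hlk hc0 hc0'] := num2 hm' Ec0 Ec1.
have Hk a : (#|[set z | R a z]|)%:R = c0.
  have -> : [set z | R a z] = [set z | R a z && R a z] by apply/setP => z; rewrite !inE andbb.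
  by rewrite -cnt Hce eA0 eqxx diag /=; ring.
have Hl a b : a != b -> (#|[set z | R a z && R b z]|)%:R = c1.
  by move=> hab; rewrite -cnt Hce eA0 (negbTE hab) /= -e12 mulr0 add0r -mulrDr off // mulr1.
have m1 : (1 < m)%N by lia.
pose a0 := @Ordinal m 0 (ltnW m1); pose a1 := @Ordinal m 1 m1.
exists (#|[set z | R a0 z]|); exists (#|[set z | R a0 z && R a1 z]|); constructor => //.
- by move=> a; apply/eqP; rewrite -(eqr_nat rat) !Hk.
- by move=> a b hab; apply/eqP; rewrite -(eqr_nat rat) !Hl.
- by rewrite -(ler_nat rat) -addn2 natrD Hk Hl.
- move=> i; case: (pickP (R i)) => [a ha|hn]; first by exists a.
  exfalso; have := row1 i; rewrite big1 => [h|b _]; last by rewrite eA -/(R i b) (hn b).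
  by move: hc0; rewrite -h ler10.
- move=> i; case: (pickP (R^~ i)) => [a ha|hn]; first by exists a.
  exfalso; have := col1 i; rewrite big1 => [h|b _]; last by rewrite eA -/(R b i) (hn b).
  by move: hc0'; rewrite -h ler10.
Qed.

Lemma mxeE m (A : 'M[rat]_m) (a b : 'I_m) : mxe A a b = A a b.
Proof.
rewrite /mxe; case: insubP => [a' _ ha|]; last by rewrite ltn_ord.
case: insubP => [b' _ hb|]; last by rewrite ltn_ord.
by congr (A _ _); apply: val_inj.
Qed.

Lemma ltX m (a : 'I_m) : (a < (m.+1).*2.-1)%N. Proof. have := ltn_ord a; lia. Qed.
Lemma ltY m (a : 'I_m) : (a + m.+1 < (m.+1).*2.-1)%N. Proof. have := ltn_ord a; lia. Qed.
Lemma ltC m : (m < (m.+1).*2.-1)%N. Proof. lia. Qed.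

Definition vX m (a : 'I_m) : 'I_((m.+1).*2.-1) := Ordinal (ltX a).
Definition vY m (a : 'I_m) : 'I_((m.+1).*2.-1) := Ordinal (ltY a).
Definition vC m : 'I_((m.+1).*2.-1) := Ordinal (ltC m).

Lemma aux01 (y : rat) (bb : bool) : y = 0 \/ y = 1 -> (bb -> y = 0) ->
  ((bb%:R + y == 1) = bb || (y == 1)).
Proof.
case: bb => /=; last by rewrite add0r.
by move=> _ ->; rewrite ?addr0 ?eqxx.
Qed.

Lemma B1_gg m (A0 A1 A2 : 'M[rat]_m) :
  A0 = 1%:M -> A2 = A1^T -> (forall a b, A1 a b = (A1 a b == 1)%:R) ->
  (forall a, A1 a a = 0) ->
  gg (fun a b => A1 a b == 1) (fun v z => @B1 m.+1 A0 A1 A2 v z == 1) (vC m) (@vX m) (@vY m).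
Proof.
move=> HA0 HA2 eA diag.
have hY1 (a : 'I_m) : (a + m.+1 < m)%N = false by lia.
have hY2 (a : 'I_m) : (a + m.+1 == m)%N = false by lia.
have hY3 (a : 'I_m) : (a + m.+1 - m.+1)%N = a by lia.
have one0 : ((1 : rat) == 0) = false by rewrite oner_eq0.
have zero1 : ((0 : rat) == 1) = false by rewrite eq_sym oner_eq0.
constructor.
- move=> [v Hv]; case: (ltngtP v m) => hv.
  + by right; left; exists (Ordinal hv); apply: val_inj.
  + right; right; have hv' : (v - m.+1 < m)%N by lia.
    by exists (Ordinal hv'); apply: val_inj; rewrite /vY /=; lia.
  + by left; apply: val_inj.
all: try move=> a; try move=> b; rewrite /B1 mxE /= ?ltn_ord ?hY1 ?hY2 ?hY3 ?ltnn ?eqxx ?mxeE //=.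
- rewrite HA0 !mxE; apply: aux01; first by rewrite eA; case: (_ == 1); [right|left].
  by move/eqP => ->; rewrite diag.
- by rewrite HA2 mxE.
Qed.

Lemma aut_entry N (B : 'M[rat]_N) (s : {perm 'I_N}) :
  (perm_mx s)^T *m B *m perm_mx s = B -> forall a b, B (s a) (s b) = B a b.
Proof.
move=> h a b.
have e : (perm_mx s)^T *m B *m perm_mx s = col_perm (s^-1)%g (row_perm (s^-1)%g B).
  by rewrite col_permE row_permE tr_perm_mx invgK.
by rewrite -{1}h e !mxE !permK.
Qed.

Lemma imset_aut (V : finType) (E : rel V) (s : {perm V}) c :
  (forall a b, E (s a) (s b) = E a b) -> s c = c ->
  s @: [set z | E c z] = [set z | E c z] /\ s @: [set z | E z c] = [set z | E z c].
Proof.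
move=> hs hc; split; apply/setP => z; rewrite inE; apply/imsetP/idP.
- by case=> y; rewrite inE => hy ->; rewrite -{1}hc hs.
- by move=> hz; exists ((s^-1)%g z); rewrite ?permKV // inE -hs permKV hc.
- by case=> y; rewrite inE => hy ->; rewrite -{1}hc hs.
- by move=> hz; exists ((s^-1)%g z); rewrite ?permKV // inE -hs permKV hc.
Qed.

Unset Implicit Arguments.

Theorem lemma2 (n : nat) (A0 A1 A2 : 'M[rat]_(n.-1)) :
  (8 <= n)%N ->
  nonsym_class2_scheme A0 A1 A2 ->
  forall s : {perm 'I_(n.*2.-1)},
    s \in aut_scheme (fam3 1%:M (B1 A0 A1 A2) (B1 A0 A1 A2)^T) ->
    [/\ s @: blk1 n = blk1 n, s @: blk2 n = blk2 n & s @: blk3 n = blk3 n].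
Proof.
case: n A0 A1 A2 => [//|m] A0 A1 A2 hn HS s Hs.
have hm : (7 <= m)%N by [].
have [HA0 HA2 eA [k [l T]]] := @scheme_facts m A0 A1 A2 hm HS.
have diag a : A1 a a = 0 by rewrite eA (t_irr T).
have G := @B1_gg m A0 A1 A2 HA0 HA2 eA diag.
move: Hs; rewrite inE => /forallP /(_ (@Ordinal 3 1 isT)) /eqP hB.
have hsE := aut_entry hB.
have hsE' : forall a b, (B1 A0 A1 A2 (s a) (s b) == 1) = (B1 A0 A1 A2 a b == 1).
  by move=> a b; rewrite hsE.
have hc := fix_c T G hsE'.
have [h1 h3] := imset_aut hsE' hc.
have e1 : blk1 m.+1 = [set z | B1 A0 A1 A2 (vC m) z == 1].
  apply/setP => z; rewrite !inE.
  have [->|[[a ->]|[a ->]]] := g_view G z.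
  - by rewrite (g_cc G) /= ltnn.
  - by rewrite (g_cX G) /= ltn_ord.
  - by rewrite (g_cY G) /=; lia.
have e3 : blk3 m.+1 = [set z | B1 A0 A1 A2 z (vC m) == 1].
  apply/setP => z; rewrite !inE.
  have [->|[[a ->]|[a ->]]] := g_view G z.
  - by rewrite (g_cc G) /= ltnn.
  - by rewrite (g_Xc G) /=; have := ltn_ord a; lia.
  - by rewrite (g_Yc G) /=; lia.
have e2 : blk2 m.+1 = [set vC m].
  by apply/setP => z; rewrite !inE; apply/eqP/eqP => [h|->//]; apply: val_inj.
by rewrite e1 e2 e3 imset_set1 hc.
Qed.
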